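(* Let $\widehat{\mathscr{O}}$ be a commutative local principal ideal ring, complete with respect to its maximal ideal $\mathfrak{m}=(\pi)$, whose residue field $k$ has characteristic different from $2$. Let $A\in \mathrm{GL}_n(\widehat{\mathscr{O}})$ be cyclic, i.e. its reduction $\overline{A}\in\mathrm{M}_n(k)$ is a cyclic matrix. For $i\ge1$ let $\mathscr{O}_i=\widehat{\mathscr{O}}/\pi^i\widehat{\mathscr{O}}$ and let $A_i$ be the image of $A$ in $\mathrm{M}_n(\mathscr{O}_i)$. Then for every $j\in\mathbb N$, the null ideal $N^{\mathscr{O}_{j+1}}_{A_{j+1}}=\{G\in\mathscr{O}_{j+1}[t]:G(A_{j+1})=0\}$ is principal, generated by the characteristic polynomial $\chi(A_{j+1})(t)$ of $A_{j+1}$ (which is the reduction of the characteristic polynomial $\chi(A)(t)$ of $A$); moreover, $\chi(A_{j+1})(t)=\mathrm{Min}_{\mathscr{O}_{j+1},A_{j+1}}(t)$, i.e. $\chi(A_{j+1})(t)$ is the monic polynomial of least degree in $\mathscr{O}_{j+1}[t]$ annihilating $A_{j+1}$.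
   Context: A matrix $X\in\mathrm{M}_n(k)$ over a field is cyclic if $k^n$, viewed as a $k[t]$-module via $X$, is a cyclic module. A matrix over $\widehat{\mathscr O}$ is called cyclic if its reduction modulo $\mathfrak m$ is cyclic. $\mathrm{Min}_{\mathscr R,X}$ denotes the minimal (least-degree monic) annihilating polynomial of $X$ over $\mathscr R$. *)

(* Defs.v *)
From HB Require Import structures.
From mathcomp Require Import all_boot all_algebra.
Set Implicit Arguments. Unset Strict Implicit. Unset Printing Implicit Defensive.
Import GRing.Theory.
Local Open Scope ring_scope.

(* Evaluation G(X) of a polynomial at a square matrix (any size n, incl. 0):
   G(X) = sum_i G_i X^i.  (Agrees with mxpoly's horner_mx when n > 0.) *)
Definition mx_eval (R : comNzRingType) (n : nat) (X : 'M[R]_n) (p : {poly R})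
  : 'M[R]_n := \sum_(i < size p) p`_i *: X ^+ i.

Definition pmul (R : comNzRingType) (d x : R) : Prop := exists y, x = d * y.

Definition is_ideal (R : comNzRingType) (I : R -> Prop) : Prop :=
  [/\ I 0, (forall x y, I x -> I y -> I (x + y)) & (forall r x, I x -> I (r * x))].

Definition principal_ideal_ring (R : comNzRingType) : Prop :=
  forall I : R -> Prop, is_ideal I -> exists g : R, forall x, I x <-> pmul g x.

Definition local_with_maximal_ideal (R : comUnitRingType) (pi : R) : Prop :=
  forall x : R, x \isn't a GRing.unit <-> pmul pi x.

Definition pi_adic_complete (R : comNzRingType) (pi : R) : Prop :=
  forall a : nat -> R, (forall k, pmul (pi ^+ k) (a k.+1 - a k)) ->
    exists l : R, forall k, pmul (pi ^+ k) (l - a k).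

Definition is_quotient_by (R S : comNzRingType) (f : {rmorphism R -> S}) (d : R)
  : Prop := (forall s : S, exists r : R, f r = s) /\
            (forall r : R, f r = 0 <-> pmul d r).

(* X in M_n(k) is cyclic: k^n (column vectors, X acting by left
   multiplication) is a cyclic k[t]-module, i.e. generated by one vector v. *)
Definition cyclic_mx (k : fieldType) (n : nat) (X : 'M[k]_n) : Prop :=
  exists v : 'cV[k]_n, forall w : 'cV[k]_n,
    exists p : {poly k}, w = mx_eval X p *m v.

Definition is_min_poly (S : comNzRingType) (n : nat) (X : 'M[S]_n) (p : {poly S})
  : Prop :=
  [/\ p \is monic, mx_eval X p = 0 &
      forall q : {poly S}, q \is monic -> mx_eval X q = 0 -> (size p <= size q)%N].

(* Main.v *)
Require Import Defs.
From HB Require Import structures.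
From mathcomp Require Import all_boot all_algebra ring.
Import GRing.Theory.
Local Open Scope ring_scope.
Set Implicit Arguments. Unset Strict Implicit.

Lemma mx_eval_horner (S : comNzRingType) n' (X : 'M[S]_n'.+1) p :
  mx_eval X p = horner_mx X p.
Proof.
rewrite /mx_eval; have -> : horner_mx X p = horner_mx X (\poly_(i < size p) p`_i) by rewrite coefK.
rewrite poly_def linear_sum /=.
by apply: eq_bigr => i _; rewrite linearZ /= rmorphXn /= horner_mx_X.
Qed.

Lemma mx_evalM (S : comNzRingType) n (X : 'M[S]_n) p q :
  mx_eval X (p * q) = mx_eval X p * mx_eval X q.
Proof.
case: n X => [|n'] X; first by rewrite !flatmx0.
by rewrite !mx_eval_horner rmorphM.
Qed.

Lemma mx_evalD (S : comNzRingType) n (X : 'M[S]_n) p q :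
  mx_eval X (p + q) = mx_eval X p + mx_eval X q.
Proof.
case: n X => [|n'] X; first by rewrite !flatmx0.
by rewrite !mx_eval_horner rmorphD.
Qed.

Lemma mx_eval_char (S : comNzRingType) n (X : 'M[S]_n) :
  mx_eval X (char_poly X) = 0.
Proof.
case: n X => [|n'] X; first by rewrite !flatmx0.
by rewrite mx_eval_horner Cayley_Hamilton.
Qed.

Definition krylov (S : comNzRingType) n (X : 'M[S]_n) (v : 'cV[S]_n) : 'M[S]_n :=
  \matrix_(i < n, j < n) (X ^+ j *m v) i 0.

Definition pcol (S : comNzRingType) n (p : {poly S}) : 'cV[S]_n :=
  \col_(j < n) p`_j.

Lemma krylovE (S : comNzRingType) n (X : 'M[S]_n) (v : 'cV[S]_n) (p : {poly S}) : (size p <= n)%N ->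
  mx_eval X p *m v = krylov X v *m pcol n p.
Proof.
move=> hp; apply/matrixP => i j; rewrite /mx_eval mulmx_suml summxE !mxE.
rewrite (big_ord_widen n (fun l => ((p`_l *: X ^+ l) *m v) i j)) //.
rewrite big_mkcond /=; apply: eq_bigr => l _; rewrite !mxE ord1.
case: ifP => // hl.
  rewrite mulr_suml; apply: eq_bigr => m _; rewrite mxE; ring.
by rewrite nth_default ?mulr0 // leqNgt hl.
Qed.

Lemma krylov_inj (S : comNzRingType) n (X : 'M[S]_n) (v : 'cV[S]_n) (p : {poly S}) :
  (exists d, d * \det (krylov X v) = 1) -> (size p <= n)%N -> mx_eval X p *m v = 0 -> p = 0.
Proof.
move=> [d hd] hp; rewrite krylovE // => H.
have hc : pcol n p = 0.
  rewrite -[pcol n p]scale1r -hd -scalerA -[(\det _ *: _)]mul_scalar_mx.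
  by rewrite -mul_adj_mx -mulmxA H mulmx0 scaler0.
apply/polyP => l; rewrite coef0; case: (ltnP l n) => hl.
  by move/matrixP: hc => /(_ (Ordinal hl) 0); rewrite !mxE.
by rewrite nth_default // (leq_trans hp hl).
Qed.

Lemma map_mxXn (R S : comNzRingType) (f : {rmorphism R -> S}) n (X : 'M[R]_n) l :
  map_mx f (X ^+ l) = (map_mx f X) ^+ l.
Proof.
elim: l => [|l IH]; first by rewrite !expr0 map_mx1.
by rewrite !exprS -!mulmxE map_mxM IH.
Qed.

Lemma map_krylov (R S : comNzRingType) (f : {rmorphism R -> S}) n (X : 'M[R]_n) v :
  map_mx f (krylov X v) = krylov (map_mx f X) (map_mx f v).
Proof.
apply/matrixP => i j; rewrite !mxE -map_mxXn.
by rewrite rmorph_sum; apply: eq_bigr => l _; rewrite rmorphM !mxE.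
Qed.

Lemma cyclic_krylov (k : fieldType) n (X : 'M[k]_n) :
  cyclic_mx X -> exists v, krylov X v \in unitmx.
Proof.
case=> v hv; exists v.
have hc : forall w : 'cV_n, exists c : 'cV_n, w = krylov X v *m c.
  move=> w; case: (hv w) => p ->.
  set r := Pdiv.Ring.rmodp p (char_poly X).
  have -> : mx_eval X p = mx_eval X r.
    rewrite {1}(Pdiv.RingMonic.rdivp_eq (char_poly_monic X) p).
    by rewrite mx_evalD mx_evalM mx_eval_char mulr0 add0r.
  exists (pcol n r); rewrite krylovE //.
  have := Pdiv.Ring.ltn_rmodpN0 p (monic_neq0 (char_poly_monic X)).
  by rewrite size_char_poly.
have [C hC] := fin_all_exists (fun j : 'I_n => hc (col j 1%:M)).
have hM : krylov X v *m (\matrix_(i, j) C j i 0) = 1%:M.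
  apply/matrixP => i j; have := congr1 (fun M : 'cV_n => M i 0) (hC j).
  rewrite !mxE => ->; apply: eq_bigr => l _; by rewrite mxE.
by case/mulmx1_unit: hM.
Qed.

Theorem corollary2p3
  (R : comUnitRingType) (pi : R)
  (Hpir : principal_ideal_ring R)
  (Hloc : local_with_maximal_ideal pi)
  (Hcompl : pi_adic_complete pi)
  (k : fieldType) (red : {rmorphism R -> k})
  (Hk : is_quotient_by red pi)
  (Hchar : (2%:R : k) != 0)
  (n : nat) (A : 'M[R]_n)
  (HA : A \in unitmx)
  (Hcyc : cyclic_mx (map_mx red A)) :
  forall (j : nat) (S : comNzRingType) (f : {rmorphism R -> S}),
    is_quotient_by f (pi ^+ j.+1) ->
    let Aj := map_mx f A in
    [/\ char_poly Aj = map_poly f (char_poly A),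
        (forall G : {poly S}, mx_eval Aj G = 0 <-> exists Q : {poly S}, G = Q * char_poly Aj)
      & is_min_poly Aj (char_poly Aj)].
Proof.
move=> j S f _ Aj.
have [v hv] := cyclic_krylov Hcyc.
have [g hg] := fin_all_exists (fun i : 'I_n => Hk.1 (v i 0)).
pose vR : 'cV[R]_n := \col_i g i.
have hvR : map_mx red vR = v by apply/matrixP => i j'; rewrite !mxE ord1 hg.
pose KR := krylov A vR.
have hKR : \det KR \is a GRing.unit.
  apply/negPn/negP => /Hloc /(Hk.2 _).2 h0.
  move: hv; rewrite -hvR -map_krylov unitmxE det_map_mx h0 unitfE eqxx.
  done.
have [y [hy _]] := unitrP hKR.
have inj : forall p : {poly S}, (size p <= n)%N -> mx_eval Aj p = 0 -> p = 0.
  move=> p hp hp0; apply: (@krylov_inj _ _ Aj (map_mx f vR)) => //.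
    exists (f y); by rewrite -map_krylov det_map_mx -rmorphM hy rmorph1.
  by rewrite hp0 mul0mx.
have hsz : size (char_poly Aj) = n.+1 by rewrite size_char_poly.
split.
- by rewrite map_char_poly.
- move=> G; split.
    move=> hG; exists (Pdiv.Ring.rdivp G (char_poly Aj)).
    set r := Pdiv.Ring.rmodp G (char_poly Aj).
    have he := Pdiv.RingMonic.rdivp_eq (char_poly_monic Aj) G.
    have hr : r = 0.
      apply: inj.
        have := Pdiv.Ring.ltn_rmodpN0 G (monic_neq0 (char_poly_monic Aj)).
        by rewrite hsz.
      move: hG; rewrite {1}he mx_evalD mx_evalM mx_eval_char mulr0 add0r.
      done.
    by rewrite {1}he -/r hr addr0.
  by case=> Q ->; rewrite mx_evalM mx_eval_char mulr0.
- split; [exact: char_poly_monic | exact: mx_eval_char |].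
  move=> q hq hq0; rewrite hsz ltnNge; apply/negP => hs.
  by move: (monic_neq0 hq); rewrite (inj q hs hq0) eqxx.
Qed.
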